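(* Let $\mathbb{F}$ be any field of characteristic zero, let $G=\langle S\rangle\le\mathrm{GL}(n,\mathbb{F})$ with $S$ finite, let $R$ be the subring of $\mathbb{F}$ generated by the entries of the matrices in $S\cup S^{-1}$, and let $\psi_\rho$ be an SW-homomorphism on $\mathrm{GL}(n,R)$. Then $G$ is central-by-finite if and only if $G_\rho$ is central in $G$.
   Context: For an ideal $\rho$ of $R$, $\psi_\rho:\mathrm{GL}(n,R)\to\mathrm{GL}(n,R/\rho)$ is the homomorphism induced by the natural projection $R\to R/\rho$, and $G_\rho$ is the kernel of $\psi_\rho$ on $G$. $\psi_\rho$ is an SW-homomorphism if $R/\rho$ is finite (so $\psi_\rho$ has finite image) and every element of finite order in the kernel of $\psi_\rho$ on $\mathrm{GL}(n,R)$ is unipotent. $G$ is central-by-finite if its centre has finite index in $G$. *)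

(* Defs.v *)
From HB Require Import structures.
From mathcomp Require Import all_boot all_order all_algebra.
Set Implicit Arguments. Unset Strict Implicit. Unset Printing Implicit Defensive.
Import Order.TTheory GRing.Theory Num.Theory.
Local Open Scope ring_scope.

Section Defs.
Variables (F : fieldType) (n : nat).
Implicit Types (S : seq 'M[F]_n) (g h : 'M[F]_n).

Inductive gen_group S : 'M[F]_n -> Prop :=
  | gg_one : gen_group S 1%:M
  | gg_gen g : g \in S -> gen_group S g
  | gg_inv g : gen_group S g -> gen_group S (invmx g)
  | gg_mul g h : gen_group S g -> gen_group S h -> gen_group S (g *m h).

Inductive gen_ring S : F -> Prop :=
  | gr_ent s i j : s \in S -> gen_ring S (s i j)
  | gr_ent_inv s i j : s \in S -> gen_ring S (invmx s i j)
  | gr_one : gen_ring S 1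
  | gr_opp x : gen_ring S x -> gen_ring S (- x)
  | gr_add x y : gen_ring S x -> gen_ring S y -> gen_ring S (x + y)
  | gr_mul x y : gen_ring S x -> gen_ring S y -> gen_ring S (x * y).

Definition is_ideal_of (R rho : F -> Prop) : Prop :=
  [/\ forall x, rho x -> R x,
      rho 0,
      forall x y, rho x -> rho y -> rho (x + y),
      forall x, rho x -> rho (- x) &
      forall r x, R r -> rho x -> rho (r * x)].

Definition finite_quotient (R rho : F -> Prop) : Prop :=
  exists reps : seq F, (forall c, c \in reps -> R c) /\
    forall r, R r -> exists2 c, c \in reps & rho (r - c).

Definition in_GL (R : F -> Prop) g : Prop :=
  g \in unitmx /\ (forall i j, R (g i j)) /\ (forall i j, R (invmx g i j)).

(* g lies in the kernel of psi_rho : GL(n,R) -> GL(n,R/rho). *)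
Definition in_ker_psi (rho : F -> Prop) g : Prop :=
  forall i j, rho (g i j - (1%:M : 'M[F]_n) i j).

Definition finite_order g : Prop := exists2 k, (0 < k)%N & g ^+ k = 1%:M.

Definition unipotent g : Prop := exists m, (g - 1%:M) ^+ m = 0.

Definition SW_hom (R rho : F -> Prop) : Prop :=
  finite_quotient R rho /\
  forall g, in_GL R g -> in_ker_psi rho g -> finite_order g -> unipotent g.

Definition centre (G : 'M[F]_n -> Prop) g : Prop :=
  G g /\ forall h, G h -> g *m h = h *m g.

Definition central_by_finite (G : 'M[F]_n -> Prop) : Prop :=
  exists reps : seq 'M[F]_n, (forall x, x \in reps -> G x) /\
    forall g, G g -> exists2 x, x \in reps & exists2 z, centre G z & g = x *m z.

Definition G_rho (G : 'M[F]_n -> Prop) (rho : F -> Prop) g : Prop :=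
  G g /\ in_ker_psi rho g.

Definition central_in (H G : 'M[F]_n -> Prop) : Prop :=
  forall h g, H h -> G g -> h *m g = g *m h.

End Defs.

(* Main.v *)
Require Import Defs.
From mathcomp Require Import all_boot all_order all_algebra.
From Stdlib Require Import ClassicalEpsilon.
Import GRing.Theory.
Local Open Scope ring_scope.
Set Implicit Arguments. Unset Strict Implicit.

Definition pb (P : Prop) : bool := if excluded_middle_informative P then true else false.
Lemma pbP P : reflect P (pb P).
Proof. rewrite /pb; case: excluded_middle_informative => H; by constructor. Qed.

Lemma invmxM (F : fieldType) n (A B : 'M[F]_n) :
  A \in unitmx -> B \in unitmx -> invmx (A *m B) = invmx B *m invmx A.
Proof.
move=> uA uB.
have uAB : A *m B \in unitmx by rewrite unitmx_mul uA uB.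
have H : A *m B *m (invmx B *m invmx A) = 1%:M by rewrite mulmxA (mulmxK uB) (mulmxV uA).
by rewrite -[LHS]mulmx1 -H mulmxA (mulVmx uAB) mul1mx.
Qed.

Section Transfer.
Variables (F : fieldType) (n : nat) (G : 'M[F]_n -> Prop).
Hypothesis G1 : G 1%:M.
Hypothesis GM : forall x y, G x -> G y -> G (x *m y).
Hypothesis GV : forall x, G x -> G (invmx x).
Hypothesis GU : forall x, G x -> x \in unitmx.
Local Notation Z := (centre G).
Implicit Types (x y z w g h : 'M[F]_n).

Lemma ZG z : Z z -> G z. Proof. by case. Qed.
Lemma Zc z x : Z z -> G x -> z *m x = x *m z. Proof. by case=> _ H /H. Qed.
Lemma Z1 : Z 1%:M. Proof. by split=> // h _; rewrite mul1mx mulmx1. Qed.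
Lemma ZM z w : Z z -> Z w -> Z (z *m w).
Proof.
move=> Zz Zw; split; first by apply: GM; apply: ZG.
by move=> h Gh; rewrite -mulmxA (Zc Zw Gh) mulmxA (Zc Zz Gh) mulmxA.
Qed.
Lemma ZV z : Z z -> Z (invmx z).
Proof.
move=> Zz; split; first by apply/GV/ZG.
move=> h Gh; have uz := GU (ZG Zz).
by rewrite -{1}(mulmxK uz h) -(Zc Zz Gh) !mulmxA (mulVmx uz) mul1mx.
Qed.

Definition eqv x y := Z (invmx x *m y).

Lemma eqv_refl x : G x -> eqv x x.
Proof. by move=> Gx; rewrite /eqv (mulVmx (GU Gx)); apply: Z1. Qed.
Lemma eqv_sym x y : G x -> G y -> eqv x y -> eqv y x.
Proof.
move=> Gx Gy /ZV; rewrite /eqv invmxM ?invmxK ?unitmx_inv //; exact: GU.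
Qed.
Lemma eqv_trans x y w : G y -> eqv x y -> eqv y w -> eqv x w.
Proof.
move=> Gy H1 H2; have := ZM H1 H2.
by rewrite /eqv !mulmxA (mulmxK (GU Gy)).
Qed.
Lemma eqv_lE g x y : G g -> G x -> invmx (g *m x) *m (g *m y) = invmx x *m y.
Proof.
move=> Gg Gx; rewrite invmxM ?GU // -!mulmxA; congr (_ *m _).
by rewrite mulmxA (mulVmx (GU Gg)) mul1mx.
Qed.

Variable r : seq 'M[F]_n.
Hypothesis rG : forall x, x \in r -> G x.
Hypothesis rcov : forall g, G g -> exists2 x, x \in r & exists2 z, Z z & g = x *m z.

Definition rr i := nth 1%:M r i.
Lemma rrG i : G (rr i).
Proof.
rewrite /rr; case: (ltnP i (size r)) => H; first by apply/rG/mem_nth.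
by rewrite nth_default.
Qed.

Definition idx x := find (fun t => pb (eqv t x)) r.

Lemma idx_lt x : G x -> (idx x < size r)%N.
Proof.
move=> Gx; rewrite /idx -has_find; case: (rcov Gx) => t tr [z Zz ->].
apply/hasP; exists t => //; apply/pbP.
by rewrite /eqv mulmxA (mulVmx (GU (rG tr))) mul1mx.
Qed.
Lemma idx_spec x : G x -> eqv (rr (idx x)) x.
Proof.
move=> Gx; have := idx_lt Gx; rewrite /idx -has_find => /(nth_find 1%:M) /pbP.
done.
Qed.
Lemma idx_eq x y : G x -> G y -> eqv x y -> idx x = idx y.
Proof.
move=> Gx Gy Hxy; rewrite /idx.
have E : (fun t => pb (eqv t x)) =1 (fun t => pb (eqv t y)).
  move=> t; apply/idP/idP => /pbP H; apply/pbP.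
    exact: eqv_trans Gx H Hxy.
  exact: eqv_trans Gy H (eqv_sym Gx Gy Hxy).
exact: eq_find E r.
Qed.
Lemma eqv_idx x y : G x -> G y -> idx x = idx y -> eqv x y.
Proof.
move=> Gx Gy E; have H1 := idx_spec Gx; have H2 := idx_spec Gy.
rewrite E in H1; exact: eqv_trans (rrG _) (eqv_sym (rrG _) Gx H1) H2.
Qed.

Definition J := [seq i <- iota 0 (size r) | idx (rr i) == i].
Definition pi g i := idx (g *m rr i).
Definition zg g i := invmx (rr (pi g i)) *m (g *m rr i).
Definition V g := \prod_(i <- J) zg g i.

Lemma zgZ g i : G g -> Z (zg g i).
Proof. by move=> Gg; apply: idx_spec; apply: GM Gg (rrG i). Qed.

Lemma idx_rr x : G x -> idx (rr (idx x)) = idx x.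
Proof. by move=> Gx; apply: idx_eq (rrG _) Gx (idx_spec Gx). Qed.

Lemma piJ g i : G g -> pi g i \in J.
Proof.
move=> Gg; rewrite mem_filter mem_iota /= add0n idx_lt ?andbT; last by apply: GM Gg (rrG i).
by rewrite /pi idx_rr //; apply: GM Gg (rrG i).
Qed.

Lemma pi_inj g : G g -> {in J &, injective (pi g)}.
Proof.
move=> Gg i j; rewrite !mem_filter => /andP[/eqP Hi _] /andP[/eqP Hj _] E.
have := eqv_idx (GM Gg (rrG i)) (GM Gg (rrG j)) E.
rewrite /eqv (eqv_lE _ Gg (rrG i)) => H.
by rewrite -Hi -Hj; apply: idx_eq (rrG i) (rrG j) H.
Qed.

Lemma pi_mul g h i : G g -> G h -> pi (g *m h) i = pi g (pi h i).
Proof.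
move=> Gg Gh; rewrite /pi; symmetry; apply: idx_eq.
- by apply: GM Gg (rrG _).
- by apply: GM (GM Gg Gh) (rrG _).
rewrite /eqv -mulmxA (eqv_lE _ Gg (rrG _)).
exact: idx_spec (GM Gh (rrG _)).
Qed.

Lemma zg_mul g h i : G g -> G h -> zg (g *m h) i = zg g (pi h i) *m zg h i.
Proof.
move=> Gg Gh; rewrite /zg pi_mul // !mulmxA (mulmxK (GU (rrG _))).
by rewrite ?mulmxA.
Qed.

Lemma prodG (s : seq nat) f : (forall i, i \in s -> G (f i)) -> G (\prod_(i <- s) f i).
Proof.
move=> H; rewrite big_seq; apply: big_ind; [exact: G1 | by move=> x y; apply: GM | done].
Qed.
Lemma prodZ (s : seq nat) f : (forall i, i \in s -> Z (f i)) -> Z (\prod_(i <- s) f i).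
Proof.
move=> H; rewrite big_seq; apply: big_ind; [exact: Z1 | by move=> x y; apply: ZM | done].
Qed.

Lemma prod_perm (s1 s2 : seq nat) f : perm_eq s1 s2 -> (forall i, i \in s1 -> Z (f i)) ->
  \prod_(i <- s1) f i = \prod_(i <- s2) f i.
Proof.
elim: s1 s2 => [|x s1 IH] s2 pe Hz.
  by have := perm_size pe; case: s2 pe.
have xs2 : x \in s2 by rewrite -(perm_mem pe) mem_head.
case/splitPr: xs2 pe => s2a s2b pe.
have pe' : perm_eq s1 (s2a ++ s2b).
  rewrite -(perm_cons x); apply: (perm_trans pe).
  by rewrite perm_sym -cat1s perm_catCA.
rewrite big_cons (IH _ pe'); last by move=> i is1; apply: Hz; rewrite in_cons is1 orbT.
rewrite !big_cat big_cons /= mulrA.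
have -> : f x * \prod_(i <- s2a) f i = \prod_(i <- s2a) f i * f x.
  apply: (Zc (Hz x (mem_head _ _))); apply: prodG => i is2a; apply: ZG; apply: Hz.
  by rewrite (perm_mem pe) mem_cat is2a.
by rewrite mulrA.
Qed.

Lemma prod_split (s : seq nat) a b : (forall i, i \in s -> Z (a i) /\ Z (b i)) ->
  \prod_(i <- s) (a i * b i) = (\prod_(i <- s) a i) * \prod_(i <- s) b i.
Proof.
elim: s => [|x s IH] H; first by rewrite !big_nil mulr1.
rewrite !big_cons IH; last by move=> i iS; apply: H; rewrite in_cons iS orbT.
rewrite -!mulrA; congr (_ * _); rewrite !mulrA; congr (_ * _).
apply: (Zc (proj2 (H x (mem_head _ _)))); apply: prodG => i iS; apply: ZG.
by apply: (proj1 (H i _)); rewrite in_cons iS orbT.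
Qed.

Lemma prod_const (s : seq nat) (z : 'M[F]_n) : \prod_(i <- s) z = z ^+ size s.
Proof. by elim: s => [|x s IH]; rewrite ?big_nil ?big_cons ?IH ?exprS. Qed.

Lemma VZ g : G g -> Z (V g).
Proof. by move=> Gg; apply: prodZ => i _; apply: zgZ. Qed.

Lemma uniqJ : uniq J.
Proof. by rewrite filter_uniq // iota_uniq. Qed.

Lemma V_mul g h : G g -> G h -> V (g *m h) = V g *m V h.
Proof.
move=> Gg Gh; rewrite /V (eq_big_seq (fun i => zg g (pi h i) * zg h i)); last first.
  by move=> i _; apply: zg_mul.
rewrite prod_split; last by move=> i _; split; apply: zgZ.
congr (_ * _).
transitivity (\prod_(j <- map (pi h) J) zg g j); first by rewrite big_map.
apply: prod_perm; last by move=> i _; apply: zgZ.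
have U : uniq (map (pi h) J) by rewrite map_inj_in_uniq ?uniqJ //; apply: pi_inj.
apply: uniq_perm => //; first exact: uniqJ.
have sub : {subset map (pi h) J <= J} by move=> y /mapP[i _ ->]; apply: piJ.
have sz : (size J <= size (map (pi h) J))%N by rewrite size_map.
by case: (uniq_min_size U sub sz).
Qed.

Lemma V_Z z : Z z -> V z = z ^+ size J.
Proof.
move=> Zz; rewrite /V -prod_const; apply: eq_big_seq => i.
rewrite mem_filter => /andP[/eqP Hi _].
have uz := GU (ZG Zz); have ur := GU (rrG i).
have E : pi z i = i.
  rewrite /pi -{2}Hi; apply: idx_eq; [exact: GM (ZG Zz) (rrG i) | exact: rrG |].
  rewrite /eqv invmxM // -mulmxA (Zc (ZV Zz) (rrG i)) mulmxA (mulVmx ur) mul1mx.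
  exact: ZV.
by rewrite /zg E (Zc Zz (rrG i)) mulmxA (mulVmx ur) mul1mx.
Qed.

Lemma J_gt0 : (0 < size J)%N.
Proof.
have H : idx 1%:M \in J.
  by rewrite mem_filter mem_iota add0n idx_lt // idx_rr // eqxx.
by case: J H.
Qed.

Lemma Gexp x e : G x -> G (x ^+ e).
Proof. by move=> Gx; elim: e => [|e IH]; rewrite ?expr0 ?exprS //; apply: GM. Qed.

Lemma V_exp x e : G x -> V (x ^+ e) = V x ^+ e.
Proof.
move=> Gx; elim: e => [|e IH].
  by rewrite !expr0 V_Z ?expr1n //; exact: Z1.
by rewrite !exprS (V_mul Gx (Gexp e Gx)) IH.
Qed.

Lemma pow_central x : G x -> exists2 e, (0 < e)%N & Z (x ^+ e).
Proof.
move=> Gx.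
case: (excluded_middle_informative (exists2 e, (0 < e)%N & Z (x ^+ e))) => // Hn.
exfalso.
pose f := fun j : 'I_(size r).+1 => Ordinal (idx_lt (Gexp j Gx)).
have inj : injective f.
  move=> i j /(congr1 val) /= E; apply: val_inj => /=.
  have Hij := eqv_idx (Gexp i Gx) (Gexp j Gx) E.
  have gen : forall a b : nat, eqv (x ^+ a) (x ^+ b) -> (a < b)%N -> False.
    move=> a b H ab; apply: Hn; exists (b - a)%N; first by rewrite subn_gt0.
    move: H; rewrite /eqv -{1}(subnKC (ltnW ab)) exprD mulmxA.
    by rewrite (mulVmx (GU (Gexp a Gx))) mul1mx.
  case: (ltngtP i j) => // H; first by case: (gen _ _ Hij H).
  by case: (gen _ _ (eqv_sym (Gexp _ Gx) (Gexp _ Gx) Hij) H).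
by have := leq_card f inj; rewrite !card_ord ltnn.
Qed.

Lemma comm_finite x y : G x -> G y ->
  finite_order (x *m y *m invmx x *m invmx y).
Proof.
move=> Gx Gy.
set c := x *m y *m invmx x *m invmx y.
have Gc : G c by apply: GM; [apply: GM; [apply: GM|apply: GV]|apply: GV].
have V1 : forall w, G w -> V w *m V (invmx w) = 1%:M.
  move=> w Gw; rewrite -(V_mul Gw (GV Gw)) (mulmxV (GU Gw)) V_Z ?expr1n //; exact: Z1.
have Vc : V c = 1%:M.
  have Gxy : G (x *m y) by apply: GM.
  have Gxyx : G (x *m y *m invmx x) by apply: GM Gxy (GV Gx).
  rewrite /c (V_mul Gxyx (GV Gy)) (V_mul Gxy (GV Gx)) (V_mul Gx Gy).
  rewrite -(mulmxA (V x)) (Zc (VZ Gy) (ZG (VZ (GV Gx)))) mulmxA V1 // mul1mx V1 //.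
case: (pow_central Gc) => e e0 Ze.
exists (e * size J)%N; first by rewrite muln_gt0 e0 J_gt0.
by rewrite exprM -(V_Z Ze) V_exp // Vc expr1n.
Qed.

End Transfer.

Lemma unip_fin_one (F : fieldType) n (c : 'M[F]_n) :
  [pchar F] =i pred0 -> finite_order c -> unipotent c -> c = 1%:M.
Proof.
move=> ch [k k0 ck] [m Nm].
set N := c - 1%:M in Nm.
have cN : c = N + 1 by rewrite /N subrK.
have NQ : N * (\sum_(i < k) c ^+ i) = 0 by rewrite /N -subrX1 ck subrr.
have step : forall j, N ^+ j.+2 = 0 -> N ^+ j.+1 = 0.
  move=> j Hj.
  have P : forall i, N ^+ j.+1 * c ^+ i = N ^+ j.+1.
    elim=> [|i IH]; first by rewrite expr0 mulr1.
    rewrite [c ^+ _.+1]exprSr mulrA IH cN mulrDr mulr1 -exprSr Hj add0r //.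
  have : N ^+ j.+1 *+ k = 0.
    have E : \sum_(i < k) N ^+ j.+1 = N ^+ j.+1 *+ k by rewrite sumr_const card_ord.
    rewrite -E.
    rewrite (eq_bigr (fun i : 'I_k => N ^+ j.+1 * c ^+ i)); last by move=> i _; rewrite P.
    rewrite -mulr_sumr.
    by rewrite exprSr -mulrA NQ mulr0.
  move=> H; apply/matrixP => a b; have := congr1 (fun M : 'M[F]_n => M a b) H.
  rewrite mulmxnE !mxE -mulr_natr => /eqP; rewrite mulf_eq0 => /orP[/eqP -> //|].
  by have /pcharf0P -> := ch; rewrite eqn0Ngt k0.
have N0 : N = 0.
  case: m Nm => [|m].
    by rewrite expr0 => H; rewrite -[N]mulr1 H mulr0.
  elim: m => [|m IH] H; first by rewrite expr1 in H.
  exact: IH (step _ H).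
by apply/eqP; rewrite -subr_eq0 -/N N0.
Qed.

Section Ring.
Variables (F : fieldType) (n : nat) (S : seq 'M[F]_n) (rho : F -> Prop).
Local Notation R := (gen_ring S).
Definition Rm (M : 'M[F]_n) := forall i j, R (M i j).
Definition Im (M : 'M[F]_n) := forall i j, rho (M i j).

Lemma R0 : R 0.
Proof. by have := gr_add (gr_one S) (gr_opp (gr_one S)); rewrite subrr. Qed.

Lemma Rm_mul A B : Rm A -> Rm B -> Rm (A *m B).
Proof.
move=> HA HB i j; rewrite mxE; apply: big_ind; [exact: R0 | exact: gr_add |].
by move=> l _; apply: gr_mul.
Qed.

Lemma Rm1 : Rm 1%:M.
Proof. by move=> i j; rewrite mxE; case: eqP => _; [exact: gr_one | exact: R0]. Qed.

Lemma gen_inv (g0 : 'M[F]_n) : (forall s, s \in S -> s \in unitmx) -> gen_group S g0 -> [/\ g0 \in unitmx, Rm g0 & Rm (invmx g0)].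
Proof.
move=> hS; elim.
- by split; rewrite ?unitmx1 ?invmx1 //; apply: Rm1.
- by move=> g gS; split; [exact: hS | move=> i j; apply: gr_ent | move=> i j; apply: gr_ent_inv].
- by move=> g _ [u H1 H2]; split; rewrite ?unitmx_inv ?invmxK.
- move=> g h _ [u1 A1 B1] _ [u2 A2 B2]; split.
  + by rewrite unitmx_mul u1 u2.
  + exact: Rm_mul.
  + by rewrite invmxM //; apply: Rm_mul.
Qed.

Hypothesis Hid : is_ideal_of R rho.

Lemma I0 : rho 0. Proof. by case: Hid. Qed.
Lemma Iadd x y : rho x -> rho y -> rho (x + y). Proof. by case: Hid => _ _ H _ _; apply: H. Qed.
Lemma Iopp x : rho x -> rho (- x). Proof. by case: Hid => _ _ _ H _; apply: H. Qed.
Lemma Imul r x : R r -> rho x -> rho (r * x). Proof. by case: Hid => _ _ _ _ H; apply: H. Qed.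

Lemma RIm A B : Rm A -> Im B -> Im (A *m B).
Proof.
move=> HA HB i j; rewrite mxE; apply: big_ind; [exact: I0 | exact: Iadd |].
by move=> l _; apply: Imul.
Qed.
Lemma ImR A B : Im A -> Rm B -> Im (A *m B).
Proof.
move=> HA HB i j; rewrite mxE; apply: big_ind; [exact: I0 | exact: Iadd |].
by move=> l _; rewrite mulrC; apply: Imul.
Qed.
Lemma Im_add A B : Im A -> Im B -> Im (A + B).
Proof. by move=> HA HB i j; rewrite mxE; apply: Iadd. Qed.
Lemma Im_opp A : Im A -> Im (- A).
Proof. by move=> HA i j; rewrite mxE; apply: Iopp. Qed.
Lemma kerE g : in_ker_psi rho g <-> Im (g - 1%:M).
Proof.
have E : forall i j, (g - 1%:M) i j = g i j - (1%:M : 'M[F]_n) i j by move=> i j; rewrite !mxE.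
by split=> H i j; [rewrite E | rewrite -E]; apply: H.
Qed.

End Ring.

Theorem corollary5p8 (F : fieldType) (n : nat) (S : seq 'M[F]_n)
    (rho : F -> Prop) :
  [pchar F] =i pred0 ->
  (forall s, s \in S -> s \in unitmx) ->
  is_ideal_of (gen_ring S) rho ->
  SW_hom n (gen_ring S) rho ->
  (central_by_finite (gen_group S) <->
   central_in (G_rho (gen_group S) rho) (gen_group S)).
Proof.
move=> ch hS Hid [FQ SW].
pose G := gen_group S.
have GU : forall x, G x -> x \in unitmx by move=> x /(gen_inv hS) [].
have GR : forall x, G x -> Rm S x by move=> x /(gen_inv hS) [].
have GRi : forall x, G x -> Rm S (invmx x) by move=> x /(gen_inv hS) [].
have GM : forall x y, G x -> G y -> G (x *m y) by move=> x y; apply: gg_mul.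
have GV : forall x, G x -> G (invmx x) by move=> x; apply: gg_inv.
have G1 : G 1%:M by apply: gg_one.
split.
- move=> [r [rG rcov]] h g [Gh kh] Gg.
  set c := h *m g *m invmx h *m invmx g.
  have Gc : G c by exact: (GM _ _ (GM _ _ (GM _ _ Gh Gg) (GV _ Gh)) (GV _ Gg)).
  have fo : finite_order c := @comm_finite _ _ G G1 GM GV GU r rG rcov h g Gh Gg.
  have uh := GU _ Gh; have ug := GU _ Gg.
  pose K := g *m invmx h *m invmx g.
  have GK : G K by exact: (GM _ _ (GM _ _ Gg (GV _ Gh)) (GV _ Gg)).
  have I1 : Im rho (invmx h - 1%:M).
    have -> : invmx h - 1%:M = invmx h *m (- (h - 1%:M)).
      by rewrite mulmxN mulmxBr mulmx1 (mulVmx uh) opprB.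
    by apply: (RIm Hid); [apply: GRi | apply: (Im_opp Hid); apply/kerE].
  have I2 : Im rho (K - 1%:M).
    have -> : K - 1%:M = g *m (invmx h - 1%:M) *m invmx g.
      by rewrite mulmxBr mulmx1 mulmxBl (mulmxV ug).
    by apply: (ImR Hid); [apply: (RIm Hid); [apply: GR|]|apply: GRi].
  have I3 : Im rho (c - 1%:M).
    have -> : c - 1%:M = (h - 1%:M) *m K + (K - 1%:M).
      by rewrite mulmxBl mul1mx addrA subrK /c /K !mulmxA.
    apply: (Im_add Hid) => //; apply: (ImR Hid); [by apply/kerE | by apply: GR].
  have GLc : in_GL (gen_ring S) c.
    by have [u A B] := gen_inv hS Gc; split.
  have c1 := unip_fin_one ch fo (SW c GLc (proj2 (kerE rho c) I3) fo).
  have : c *m (g *m h) = g *m h by rewrite c1 mul1mx.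
  by rewrite /c !mulmxA (mulmxKV ug) (mulmxKV uh).
- move=> Hc.
  case: FQ => reps0 [reps0R cov0].
  pose k0 := size reps0.
  pose matches (x : 'M[F]_n) (p : {ffun 'I_n * 'I_n -> 'I_k0}) :=
    forall i j, rho (x i j - nth 0 reps0 (p (i, j))).
  have Hpat : forall g, G g -> exists p, matches g p.
    move=> g Gg.
    have H : forall ij : 'I_n * 'I_n, exists l : 'I_k0, rho (g ij.1 ij.2 - nth 0 reps0 l).
      case=> i j /=; case: (cov0 _ (GR g Gg i j)) => c cin hc.
      have lt : (index c reps0 < k0)%N by rewrite index_mem.
      by exists (Ordinal lt) => /=; rewrite nth_index.
    exists [ffun ij => proj1_sig (constructive_indefinite_description _ (H ij))].
    by move=> i j; rewrite ffunE; exact: (proj2_sig (constructive_indefinite_description _ (H (i, j)))).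
  pose sel p := match excluded_middle_informative (exists x, G x /\ matches x p) with
    | left H => proj1_sig (constructive_indefinite_description _ H)
    | right _ => 1%:M end.
  have selG : forall p, G (sel p).
    move=> p; rewrite /sel; case: excluded_middle_informative => [H|//].
    by case: (proj2_sig (constructive_indefinite_description _ H)).
  have selM : forall p, (exists x, G x /\ matches x p) -> matches (sel p) p.
    move=> p Hx; rewrite /sel; case: excluded_middle_informative => [H|//].
    by case: (proj2_sig (constructive_indefinite_description _ H)).
  exists (map sel (enum {ffun 'I_n * 'I_n -> 'I_k0})); split.
    by move=> x /mapP [p _ ->]; apply: selG.
  move=> g Gg; case: (Hpat g Gg) => p Hp.
  have Mx := selM p (ex_intro _ g (conj Gg Hp)).
  have ux := GU _ (selG p).
  exists (sel p); first by apply: map_f; rewrite mem_enum.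
  exists (invmx (sel p) *m g); last by rewrite (mulKVmx ux).
  split; first by apply: GM (GV _ (selG p)) Gg.
  move=> h Gh; apply: Hc => //; split; first by apply: GM (GV _ (selG p)) Gg.
  apply/kerE.
  have -> : invmx (sel p) *m g - 1%:M = invmx (sel p) *m (g - sel p).
    by rewrite mulmxBr (mulVmx ux).
  apply: (RIm Hid); first by apply: GRi.
  move=> i j; rewrite !mxE.
  have := Iadd Hid (Hp i j) (Iopp Hid (Mx i j)).
  by rewrite opprB addrA subrK.
Qed.
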